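(* Let $A$ be a finite skew brace, $k$ a field, and $(V,\beta,\rho)$ an irreducible representation of $A$ over $k$. Then the group representation $(V,\beta)$ of $(A,\cdot)$ is completely reducible (i.e. $V$ is semisimple as a $k(A,\cdot)$-module).
   Context: A skew brace is a set $A$ with two group operations $\cdot$ and $\circ$ such that $a\circ(b\cdot c)=(a\circ b)\cdot a^{-1}\cdot(a\circ c)$ for all $a,b,c\in A$; here $a^{-1}$ is the inverse in $(A,\cdot)$. For $a\in A$ let $\lambda^{\mathrm{op}}_a(b)=(a\circ b)\cdot a^{-1}$. A representation of $A$ over $k$ is a triple $(V,\beta,\rho)$ with $V$ a $k$-vector space, $\beta:(A,\cdot)\to\mathrm{GL}(V)$, $\rho:(A,\circ)\to\mathrm{GL}(V)$ group homomorphisms such that $\beta(\lambda^{\mathrm{op}}_a(b))=\rho(a)\beta(b)\rho(a)^{-1}$ for all $a,b\in A$. It is irreducible if $V\ne 0$ and the only subspaces of $V$ invariant under all $\beta(a)$ and all $\rho(b)$ ($a,b\in A$) are $0$ and $V$. *)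

(* Defs.v *)
From HB Require Import structures.
From mathcomp Require Import all_boot all_order all_algebra all_fingroup.
From mathcomp Require Import mxrepresentation.
Set Implicit Arguments. Unset Strict Implicit. Unset Printing Implicit Defensive.
Import GRing.Theory.
Local Open Scope ring_scope.

(* A finite skew brace: the additive group (A, .) is the finGroupType A
   (multiplication [*], inverse [^-1]); the second operation [circ] makes A a
   group and satisfies the skew brace compatibility law. *)
Definition is_group_op (A : Type) (circ : A -> A -> A) : Prop :=
  associative circ /\
  exists e : A, left_id e circ /\ right_id e circ /\
    (forall a, exists b, circ a b = e /\ circ b a = e).

Definition is_skew_brace (A : finGroupType) (circ : A -> A -> A) : Prop :=
  is_group_op circ /\
  forall a b c : A, circ a (b * c)%g = (circ a b * a^-1 * circ a c)%g.

Definition lambda_op (A : finGroupType) (circ : A -> A -> A) (a b : A) : A :=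
  (circ a b * a^-1)%g.

Definition circ_repr (k : fieldType) (A : finGroupType) (circ : A -> A -> A)
  (n : nat) (rho : A -> 'M[k]_n) : Prop :=
  (forall a, rho a \in unitmx) /\
  (forall a b, rho (circ a b) = rho a *m rho b).

(* (V, beta, rho) with V = k^n (row vectors), beta a representation of (A,.) *)
Definition skew_brace_repr (k : fieldType) (A : finGroupType)
  (circ : A -> A -> A) (n : nat)
  (beta : mx_representation k [set: A] n) (rho : A -> 'M[k]_n) : Prop :=
  circ_repr circ rho /\
  forall a b : A, beta (lambda_op circ a b) = rho a *m beta b *m invmx (rho a).

(* Irreducible: V <> 0 and the only subspaces invariant under all beta a and
   all rho b are 0 and V. Subspaces are row spaces of square matrices. *)
Definition skew_brace_irr (k : fieldType) (A : finGroupType) (n : nat)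
  (beta : mx_representation k [set: A] n) (rho : A -> 'M[k]_n) : Prop :=
  (0 < n)%N /\
  forall U : 'M[k]_n,
    (forall a : A, stablemx U (beta a)) ->
    (forall b : A, stablemx U (rho b)) ->
    (U == (0 : 'M[k]_n))%MS \/ (U == (1%:M : 'M[k]_n))%MS.

(* Main.v *)
Require Import Defs.
From HB Require Import structures.
From mathcomp Require Import all_boot all_order all_algebra all_fingroup.
From mathcomp Require Import mxrepresentation.
From Stdlib Require Import Classical ClassicalEpsilon.
From mathcomp Require Import zify.
Set Implicit Arguments. Unset Strict Implicit. Unset Printing Implicit Defensive.
Import GRing.Theory.
Local Open Scope ring_scope.

Section Aux.
Variables (A : finGroupType) (circ : A -> A -> A) (k : fieldType) (n : nat).
Variables (beta : mx_representation k [set: A] n) (rho : A -> 'M[k]_n).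
Hypothesis Hsb : is_skew_brace circ.
Hypothesis Hr : skew_brace_repr circ beta rho.

Lemma rho_unit x : rho x \in unitmx.
Proof. by case: Hr => [[H _] _]. Qed.

Lemma mod_rho x (U : 'M[k]_n) : mxmodule beta U -> mxmodule beta (U *m rho x).
Proof.
move/mxmoduleP=> modU; apply/mxmoduleP => c _.
case: Hr => _ Hl.
have E : rho x *m beta c = beta (lambda_op circ x c) *m rho x.
  by rewrite Hl mulmxKV // rho_unit.
rewrite -mulmxA E mulmxA submxMr // modU // inE.
Qed.

Lemma rho_inv x : exists y, rho y = invmx (rho x).
Proof.
case: Hsb => [[_ [e [He1 [_ Hinv]]]] _]; case: Hr => [[Hu Hm] _].
have He : rho e = 1%:M.
  have := Hm e e; rewrite He1 => Hee.
  by rewrite -(mulKmx (Hu e) (rho e)) -Hee mulVmx.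
case: (Hinv x) => y [Hxy _]; exists y.
have := Hm x y; rewrite Hxy He => H1.
by rewrite -[rho y](mulKmx (Hu x)) -H1 mulmx1.
Qed.

Lemma simple_rho x (M : 'M[k]_n) : mxsimple beta M -> mxsimple beta (M *m rho x).
Proof.
case=> modM nzM simM; split; first exact: mod_rho.
  by rewrite mulmx_free_eq0 // row_free_unit rho_unit.
move=> U modU sUM nzU.
have [y Hy] := rho_inv x.
have sM : (M <= U *m rho y)%MS.
  apply: simM; first exact: mod_rho.
    by rewrite -(mulmxK (rho_unit x) M) Hy submxMr.
  by rewrite mulmx_free_eq0 // row_free_unit rho_unit.
by rewrite -(mulmxKV (rho_unit x) U) -Hy submxMr.
Qed.

Lemma semisimple_rho x (V : 'M[k]_n) :
  mxsemisimple beta V -> mxsemisimple beta (V *m rho x).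
Proof.
case=> I W /= simW defV _.
have defVf: (\sum_i W i *m rho x :=: V *m rho x)%MS.
  by apply: eqmx_trans (eqmx_sym _) (eqmxMr (rho x) defV); apply: sumsmxMr.
by apply: (intro_mxsemisimple defVf) => i _ _; apply: simple_rho.
Qed.

Definition maxss (S : 'M[k]_n) := inhabited (mxsemisimple beta S) /\
  forall T, mxsemisimple beta T -> (S <= T)%MS -> (T <= S)%MS.

Lemma maxss_exists : exists S, maxss S.
Proof.
suff H : forall m S, mxsemisimple beta S -> (n - \rank S <= m)%N -> exists S', maxss S'.
  by apply: (H n 0) ; [exact: mxsemisimple0 | exact: leq_subr].
elim=> [|m IH] S ssS hm.
  exists S; split; first by constructor.
  move=> T ssT sST; apply: contraT => nTS.
  have := rank_ltmx (_ : (S < T)%MS); rewrite ltmxE sST nTS => /(_ isT) lt.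
  have := rank_leq_col T; move: hm lt; lia.
case: (classic (exists T, inhabited (mxsemisimple beta T) /\ (S <= T)%MS /\ ~~ (T <= S)%MS)).
  case=> T [[ssT] [sST nTS]]; apply: (IH T ssT).
  have lt := rank_ltmx (_ : (S < T)%MS); rewrite ltmxE sST nTS in lt.
  have := lt isT; have := rank_leq_col T; move: hm; lia.
move=> Hno; exists S; split; first by constructor.
  move=> T ssT sST; apply: contraT => nTS.
by case: Hno; exists T; split; first by constructor.
Qed.

End Aux.

Theorem proposition3p3 (A : finGroupType) (circ : A -> A -> A)
  (k : fieldType) (n : nat)
  (beta : mx_representation k [set: A] n) (rho : A -> 'M[k]_n) :
  is_skew_brace circ ->
  skew_brace_repr circ beta rho ->
  skew_brace_irr beta rho ->
  mx_completely_reducible beta 1%:M.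
Proof.
move=> Hsb Hr [npos Hirr].
suff H : inhabited (mxsemisimple beta 1%:M).
  by apply: mxsemisimple_reducible; exact: (epsilon H (fun _ => True)).
have [S [[ssS] maxS]] := maxss_exists beta.
have modS := mxsemisimple_module ssS.
have stab : forall b, stablemx S (rho b).
  move=> b.
  have ss2 := addsmx_semisimple ssS (semisimple_rho Hsb Hr b ssS).
  have := maxS _ ss2 (addsmxSl _ _).
  by rewrite addsmx_sub => /andP[].
have stabb : forall a, stablemx S (beta a).
  by move=> a; move/mxmoduleP: modS; apply; rewrite inE.
have nzS : S != 0.
  have: mxmodule beta (1%:M : 'M[k]_n) by exact: mxmodule1.
  move=> mod1; have nz1 : (1%:M : 'M[k]_n) != 0.
    by rewrite -mxrank_eq0 mxrank1 -lt0n.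
  apply: (mxsimple_exists mod1 nz1) => [[V simV _]].
  have ss2 := addsmx_semisimple ssS (mxsimple_semisimple simV).
  have := maxS _ ss2 (addsmxSl _ _); rewrite addsmx_sub => /andP[_ sVS].
  apply: contraTneq sVS => ->; rewrite submx0.
  by case: simV.
case: (Hirr S stabb stab) => /eqmxP E.
  by move: nzS; rewrite -submx0 => /negP; case; rewrite E sub0mx.
by constructor; exact: eqmx_semisimple E ssS.
Qed.
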